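(* Let $0<\gamma_0\le\gamma_1$, $0<\eta\le1/\gamma_1$, let $\Sigma$ be symmetric positive definite with $\gamma_0I\preceq\Sigma^{-1}\preceq\gamma_1I$, and let $S$ be symmetric with $\gamma_0I\preceq S\preceq\gamma_1I$. Define $\Sigma'=(I-\eta S)\Sigma(I-\eta S)$ and $\Sigma''=\frac12\big(\Sigma'+2\eta I+[\Sigma'(\Sigma'+4\eta I)]^{1/2}\big)$. Then $$\gamma_1^{-1}I\preceq\Sigma''\preceq\gamma_0^{-1}I.$$ (Thus, at iteration $k$ of FB--GVI or Stochastic FB--GVI, if $\gamma_0I\preceq\Sigma_k^{-1}\preceq\gamma_1I$ and $\gamma_0I\preceq S_k\preceq\gamma_1I$, then $\gamma_1^{-1}I\preceq\Sigma_{k+1}\preceq\gamma_0^{-1}I$.)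
   Context: $[\cdot]^{1/2}$ is the principal positive semidefinite square root; $\Sigma'$ and $\Sigma'+4\eta I$ commute so their product is positive semidefinite. In FB--GVI/Stochastic FB--GVI the covariance update is $\Sigma_{k+1/2}=(I-\eta S_k)\Sigma_k(I-\eta S_k)$, $\Sigma_{k+1}=\frac12\big(\Sigma_{k+1/2}+2\eta I+[\Sigma_{k+1/2}(\Sigma_{k+1/2}+4\eta I)]^{1/2}\big)$, where $S_k=\mathbb E_{p_k}\nabla^2V$ (deterministic) or $S_k=\nabla^2V(\hat X_k)$ with $\hat X_k\sim p_k$ (stochastic). *)

(* Defs.v *)
From HB Require Import structures.
From mathcomp Require Import all_boot all_order all_algebra.
From mathcomp Require Import reals.
From Stdlib Require Import ClassicalEpsilon.
Set Implicit Arguments. Unset Strict Implicit. Unset Printing Implicit Defensive.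
Import Order.TTheory GRing.Theory Num.Theory.
Local Open Scope ring_scope.

Section Defs.
Variables (R : realType) (n : nat).

Definition symmx (A : 'M[R]_n) : Prop := A^T = A.

Definition psdmx (A : 'M[R]_n) : Prop :=
  symmx A /\ forall v : 'cV[R]_n, 0 <= (v^T *m A *m v) 0 0.

Definition pdmx (A : 'M[R]_n) : Prop :=
  symmx A /\ forall v : 'cV[R]_n, v != 0 -> 0 < (v^T *m A *m v) 0 0.

Definition loewner_le (A B : 'M[R]_n) : Prop := psdmx (B - A).

(* principal positive semidefinite square root: the (unique) PSD matrix X
   with X *m X = M (chosen by Hilbert's epsilon; arbitrary if none exists) *)
Definition psd_sqrt (M : 'M[R]_n) : 'M[R]_n :=
  epsilon (inhabits 0) (fun X : 'M[R]_n => psdmx X /\ X *m X = M).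

End Defs.

(* Main.v *)
Require Import Defs.
From HB Require Import structures.
From mathcomp Require Import all_boot all_order all_algebra.
From mathcomp Require Import reals.
From mathcomp Require Import complex spectral sesquilinear.
From mathcomp Require Import ring lra.
From Stdlib Require Import ClassicalEpsilon.
Import Order.TTheory GRing.Theory Num.Theory.
Local Open Scope ring_scope.
Set Implicit Arguments. Unset Strict Implicit. Unset Printing Implicit Defensive.

Section Spec.
Variable R : realType.
Local Notation C := (R[i]).
Definition rc : {rmorphism R -> C} := real_complex R.
Local Notation "A ^c" := (map_mx rc A).

Lemma rc_real (x : R) : Num.conj (rc x) = rc x.
Proof. by apply: conj_Creal; rewrite /rc /= complex_real. Qed.

Lemma herm_c m (A : 'M[R]_m) : A^T = A -> A^c \is hermsymmx.
Proof.
move=> sA; apply/is_hermitianmxP; rewrite expr0 scale1r.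
apply/matrixP => i j; rewrite !mxE rc_real.
by have := congr1 (fun M : 'M[R]_m => M j i) sA; rewrite mxE => ->.
Qed.

Lemma normsq (x : C) : Num.conj x * x = rc (complex.Re x ^+ 2 + complex.Im x ^+ 2).
Proof.
case: x => a b /=. rewrite [LHS]/GRing.mul /=.
rewrite /rc /= /real_complex_def; congr Complex; rewrite ?expr2; ring.
Qed.

Variable n : nat.

Lemma spec_real (A : 'M[R]_n.+1) : A^T = A ->
  exists d : 'I_n.+1 -> R,
  [/\ forall i, exists2 v : 'cV[R]_n.+1, v != 0 & A *m v = d i *: v,
      forall v : 'cV[R]_n.+1, exists w : 'I_n.+1 -> R, (forall i, 0 <= w i) /\
         forall p, (v^T *m horner_mx A p *m v) 0 0 = \sum_i p.[d i] * w i
    & forall p, (forall i, p.[d i] = 0) -> horner_mx A p = 0].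
Proof.
move=> sA.
have hA := herm_c sA.
have /orthomx_spectralP eA := hermitian_normalmx hA.
have dreal := hermitian_spectral_diag_real hA.
move: eA dreal.
have Pu := spectral_unitarymx (A^c).
have Punit := spectral_unit (A^c).
set P := spectralmx (A^c) in Pu Punit *.
set dl := spectral_diag (A^c).
move=> eA dreal.
have iP : invmx P = (P ^t* )%sesqui := invmx_unitary Pu.
pose d i := complex.Re (dl 0 i).
have ed i : rc (d i) = dl 0 i.
  by apply: RRe_real; apply: (mxOverP dreal).
have hornE (p : {poly R}) : (horner_mx A p)^c =
    invmx P *m diag_mx (map_mx (horner (map_poly rc p)) dl) *m P.
  by rewrite map_horner_mx [in LHS]eA (horner_mx_uconjC _ _ Punit) horner_mx_diag.
exists d; split.
- move=> i.
  pose e := (delta_mx 0 i : 'rV[C]_n.+1) *m P.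
  have e0 : e != 0.
    apply/eqP => /(congr1 (mulmx^~ (invmx P))).
    rewrite mul0mx /e mulmxK // => /matrixP /(_ 0 i); rewrite !mxE !eqxx /=.
    by move/eqP; rewrite oner_eq0.
  have ee : e *m A^c = dl 0 i *: e.
    rewrite [in LHS]eA /e !mulmxA mulmxK //.
    rewrite scalemxAl; congr (_ *m _).
    rewrite mul_mx_diag; apply/matrixP => a b; rewrite !mxE.
    by case: (eqVneq b i) => [->|]; rewrite ?andbF ?mul0r ?mulr0 // mulrC.
  have : eigenvalue (A^c) (dl 0 i) by apply/eigenvalueP; exists e.
  rewrite eigenvalue_root_char -map_char_poly -ed fmorph_root.
  rewrite -eigenvalue_root_char => /eigenvalueP [u uA u0].
  exists u^T; first by rewrite trmx_eq0.
  by rewrite -{1}sA -trmx_mul uA linearZ.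
- move=> v.
  pose z := P *m v^c.
  exists (fun i => complex.Re (z i 0) ^+ 2 + complex.Im (z i 0) ^+ 2).
  split; first by move=> i; rewrite addr_ge0 // sqr_ge0.
  move=> p; apply: (fmorph_inj rc).
  have zt : (z ^t* )%sesqui = (v^c)^T *m (P^t* )%sesqui.
    rewrite /z trmx_mul map_mxM; congr (_ *m _).
    by apply/matrixP => a b; rewrite !mxE; exact: rc_real.
  have -> : rc ((v^T *m horner_mx A p *m v) 0 0) = ((v^T *m horner_mx A p *m v)^c) 0 0.
    by rewrite [RHS]mxE.
  rewrite !map_mxM -map_trmx hornE iP !mulmxA -zt -(mulmxA _ P) -/z.
  rewrite mxE rmorph_sum; apply: eq_bigr => j _.
  rewrite mul_mx_diag !mxE rmorphM -horner_map ed -normsq.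
  by rewrite mulrAC [LHS]mulrC.
- move=> p hp; apply: (@map_mx_inj _ _ rc); rewrite hornE map_mx0.
  have -> : map_mx (horner (map_poly rc p)) dl = 0.
    by apply/matrixP => a b; rewrite !mxE (ord1 a) -ed horner_map hp rmorph0.
  have -> : diag_mx 0 = 0 :> 'M[C]_n.+1.
    by apply/matrixP=> a b; rewrite !mxE mul0rn.
  by rewrite mulmx0 mul0mx.
Qed.

End Spec.

Section Real.
Variables (R : realType) (n : nat).
Local Notation M := 'M[R]_n.+1.
Local Notation V := 'cV[R]_n.+1.
Definition dot (u w : V) : R := (u^T *m w) 0 0.

Lemma dotC u w : dot u w = dot w u.
Proof. by rewrite /dot -[in LHS](trmxK w) -trmx_mul mxE. Qed.
Lemma dotDr u w1 w2 : dot u (w1 + w2) = dot u w1 + dot u w2.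
Proof. by rewrite /dot mulmxDr mxE. Qed.
Lemma dotDl u1 u2 w : dot (u1 + u2) w = dot u1 w + dot u2 w.
Proof. by rewrite dotC dotDr !(dotC w). Qed.
Lemma dotZr u a w : dot u (a *: w) = a * dot u w.
Proof. by rewrite /dot -scalemxAr mxE. Qed.
Lemma dotZl u a w : dot (a *: u) w = a * dot u w.
Proof. by rewrite dotC dotZr dotC. Qed.
Lemma dotNr u w : dot u (- w) = - dot u w.
Proof. by rewrite -scaleN1r dotZr mulN1r. Qed.
Lemma dotNl u w : dot (- u) w = - dot u w.
Proof. by rewrite dotC dotNr dotC. Qed.
Lemma dotBr u w1 w2 : dot u (w1 - w2) = dot u w1 - dot u w2.
Proof. by rewrite dotDr dotNr. Qed.
Lemma dotBl u1 u2 w : dot (u1 - u2) w = dot u1 w - dot u2 w.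
Proof. by rewrite dotDl dotNl. Qed.
Lemma dotMr u (A : M) w : dot u (A *m w) = dot (A^T *m u) w.
Proof. by rewrite /dot trmx_mul trmxK mulmxA. Qed.
Lemma dotE u : dot u u = \sum_i u i 0 ^+ 2.
Proof. by rewrite /dot mxE; apply: eq_bigr => i _; rewrite mxE expr2. Qed.
Lemma dot_ge0 u : 0 <= dot u u.
Proof. by rewrite dotE sumr_ge0 // => i _; rewrite sqr_ge0. Qed.
Lemma dot_gt0 u : u != 0 -> 0 < dot u u.
Proof.
move=> u0; rewrite lt_def dot_ge0 andbT; apply: contraNN u0 => /eqP h.
apply/eqP/matrixP => i j; rewrite (ord1 j) mxE.
have h2 : \sum_(k < n.+1) u k 0 ^+ 2 = 0 by rewrite -dotE h.
have := psumr_eq0P (fun k _ => sqr_ge0 (u k 0)) h2 (i:=i).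
by move=> /(_ isT) /eqP; rewrite sqrf_eq0 => /eqP.
Qed.
Lemma dot_scalar u a : dot u (a%:M *m u) = a * dot u u.
Proof. by rewrite mul_scalar_mx dotZr. Qed.

Lemma psdE (A : M) : psdmx A <-> A^T = A /\ forall v, 0 <= dot v (A *m v).
Proof. by rewrite /psdmx /symmx /dot; split => -[h1 h2]; split => // v; rewrite ?mulmxA // -mulmxA. Qed.


Lemma horner_tr (A : M) p : A^T = A -> (horner_mx A p)^T = horner_mx A p.
Proof.
move=> sA; elim/poly_ind: p => [|p c IH]; first by rewrite rmorph0 trmx0.
rewrite rmorphD rmorphM /= horner_mx_X horner_mx_C linearD /= tr_scalar_mx.
congr (_ + _); rewrite [_ * A]/(_ *m _) trmx_mul IH sA.
by have := comm_mx_horner p (comm_mx_refl A).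
Qed.

Lemma poly_psd (A : M) a b p : A^T = A ->
  (forall v, a * dot v v <= dot v (A *m v)) ->
  (forall v, dot v (A *m v) <= b * dot v v) ->
  (forall x, a <= x <= b -> 0 <= p.[x]) ->
  forall v, 0 <= dot v (horner_mx A p *m v).
Proof.
move=> sA lo hi hp v.
have [d [eig qfw _]] := spec_real sA.
have hd i : a <= d i <= b.
  have [u u0 Au] := eig i; have pu := dot_gt0 u0.
  have := lo u; have := hi u; rewrite Au dotZr => h1 h2.
  by rewrite -(ler_pM2r pu) h2 /= -(ler_pM2r pu) h1.
have [w [w0 ew]] := qfw v.
rewrite /dot mulmxA ew; apply: sumr_ge0 => i _; apply: mulr_ge0 => //.
exact: hp.
Qed.

Lemma pos_eig (A : M) u : A^T = A -> 0 < dot u (A *m u) ->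
  exists2 v : V, v != 0 & exists2 l, 0 < l & A *m v = l *: v.
Proof.
move=> sA pu.
have [d [eig qfw _]] := spec_real sA.
have [w [w0 ew]] := qfw u.
have : exists i, 0 < d i.
  apply/existsP; apply: contraTT pu; rewrite negb_exists => /forallP h.
  rewrite -leNgt /dot mulmxA -{1}(horner_mx_X A) ew.
  apply: sumr_le0 => i _; rewrite hornerX; apply: mulr_le0_ge0 => //.
  by rewrite leNgt h.
case=> i di; have [v v0 Av] := eig i; exists v => //; by exists (d i).
Qed.

Lemma interp_seq (s : seq R) (f : R -> R) :
  exists q : {poly R}, forall x, x \in s -> q.[x] = f x.
Proof.
elim: s => [|x s [q hq]]; first by exists 0.
have [xs|xs] := boolP (x \in s).
  by exists q => y; rewrite inE => /orP [/eqP ->|]; [exact: hq | exact: hq].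
pose r := \prod_(y <- s) ('X - y%:P).
have rx : r.[x] != 0.
  rewrite /r horner_prod prodf_seq_neq0; apply/allP => y ys /=.
  by rewrite hornerXsubC subr_eq0; apply: contraNneq xs => ->.
have ry y : y \in s -> r.[y] = 0.
  move=> ys; apply/eqP; rewrite /r horner_prod prodf_seq_eq0; apply/hasP.
  by exists y => //=; rewrite hornerXsubC subrr.
exists (q + ((f x - q.[x]) / r.[x]) *: r) => y; rewrite inE hornerD hornerZ.
case/orP => [/eqP ->|ys]; first by rewrite divfK // addrC subrK.
by rewrite (ry y ys) mulr0 addr0 hq.
Qed.

Lemma interp (d : 'I_n.+1 -> R) (f : R -> R) :
  exists q : {poly R}, forall i, q.[d i] = f (d i).
Proof.
have [q hq] := interp_seq [seq d i | i <- enum 'I_n.+1] f.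
by exists q => i; apply: hq; apply: map_f; rewrite mem_enum.
Qed.

Lemma sqrt_exists (A : M) (m : {poly R}) : A^T = A ->
  (forall v, 0 <= dot v (A *m v)) -> (forall x, 0 <= x -> 0 <= m.[x]) ->
  exists X, psdmx X /\ X *m X = horner_mx A m.
Proof.
move=> sA pA pm.
have [d [eig qfw z0]] := spec_real sA.
have hd i : 0 <= d i.
  have [u u0 Au] := eig i; have pu := dot_gt0 u0.
  by have := pA u; rewrite Au dotZr pmulr_lge0.
have [q hq] := interp d (fun x => Num.sqrt m.[x]).
exists (horner_mx A q); split.
  apply/psdE; split; first exact: horner_tr.
  move=> v; have [w [w0 ew]] := qfw v.
  rewrite /dot mulmxA ew; apply: sumr_ge0 => i _; apply: mulr_ge0 => //.
  by rewrite hq sqrtr_ge0.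
apply/eqP; rewrite -subr_eq0 -[_ *m _]/(_ * _) -rmorphM -rmorphB; apply/eqP.
apply: z0 => i; rewrite hornerD hornerN hornerM hq -expr2 sqr_sqrtr ?subrr //.
by apply: pm.
Qed.

Lemma mono (X Z : M) : psdmx X -> Z^T = Z -> psdmx (X *m X - Z *m Z) ->
  psdmx (X - Z).
Proof.
move=> /psdE [sX pX] sZ /psdE [_ pXZ]; apply/psdE; split.
  by rewrite linearB /= sX sZ.
move=> u; rewrite leNgt; apply/negP => hu.
have sZX : (Z - X)^T = Z - X by rewrite linearB /= sX sZ.
have [v v0 [l l0 eZ]] : exists2 v : V, v != 0 & exists2 l, 0 < l & (Z - X) *m v = l *: v.
  by apply: (pos_eig (u:=u) sZX); rewrite -opprB mulNmx dotNr oppr_gt0.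
have eZv : Z *m v = X *m v + l *: v.
  by rewrite -eZ mulmxBl addrC subrK.
have := pXZ v; rewrite mulmxBl dotBr -!mulmxA !(dotMr v X) !(dotMr v Z) sX sZ.
rewrite eZv dotDl !dotDr !dotZl !dotZr !(dotC (X *m v) v).
have := pX v; have := dot_gt0 v0 => h1 h2.
set a := dot _ (X *m v) in h2 *; set b := dot v v in h1 *. 
have := mulr_ge0 (ltW l0) h2; have := mulr_gt0 l0 (mulr_gt0 l0 h1); set c := dot (X *m v) _; lra.
Qed.

Lemma psdZ (c : R) (W : M) : 0 <= c -> psdmx W -> psdmx (c *: W).
Proof.
move=> c0 /psdE [sW pW]; apply/psdE; split; first by rewrite linearZ /= sW.
by move=> v; rewrite -scalemxAl dotZr mulr_ge0.
Qed.

Lemma psd_aff1 (A : M) (al be : R) : A^T = A ->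
  (forall v, be * dot v (A *m v) <= al * dot v v) -> psdmx (al%:M - be *: A).
Proof.
move=> sA h; apply/psdE; split; first by rewrite linearB linearZ /= sA tr_scalar_mx.
by move=> v; rewrite mulmxBl dotBr dot_scalar -scalemxAl dotZr subr_ge0.
Qed.

Lemma psd_aff2 (A : M) (al be : R) : A^T = A ->
  (forall v, al * dot v v <= be * dot v (A *m v)) -> psdmx (be *: A - al%:M).
Proof.
move=> sA h; apply/psdE; split; first by rewrite linearB linearZ /= sA tr_scalar_mx.
by move=> v; rewrite mulmxBl dotBr dot_scalar -scalemxAl dotZr subr_ge0.
Qed.

Lemma sq_aff (A : M) (k e : R) :
  (k%:M - A) *m (k%:M - A) - A *m (A + e%:M) = (k ^+ 2)%:M - (2 * k + e) *: A.
Proof.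
rewrite mulmxBl !mulmxBr mulmxDr !mul_scalar_mx !mul_mx_scalar scale_scalar_mx.
apply/matrixP => i j; rewrite !mxE; case: (i == j); rewrite ?mulr1n ?mulr0n; ring.
Qed.

Lemma idL (A X : M) (g e k : R) : k = 2 * g - 2 * e ->
  2^-1 *: (A + (2 * e)%:M + X) - g%:M = 2^-1 *: (X - (k%:M - A)).
Proof.
move=> ->; apply/matrixP => i j; rewrite !mxE.
by case: (i == j); rewrite ?mulr1n ?mulr0n; field.
Qed.

Lemma idU (A X : M) (g e k : R) : k = 2 * g - 2 * e ->
  g%:M - 2^-1 *: (A + (2 * e)%:M + X) = 2^-1 *: ((k%:M - A) - X).
Proof.
move=> ->; apply/matrixP => i j; rewrite !mxE.
by case: (i == j); rewrite ?mulr1n ?mulr0n; field.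
Qed.

Lemma sq_aff' (A : M) (k e : R) :
  A *m (A + e%:M) - (k%:M - A) *m (k%:M - A) = (2 * k + e) *: A - (k ^+ 2)%:M.
Proof. by rewrite -opprB sq_aff opprB. Qed.

End Real.

Lemma psd0 (R : realType) (A : 'M[R]_0) : psdmx A.
Proof.
split; first by apply/matrixP => i; case: i.
by move=> v; rewrite mxE big1 // => j _; rewrite mxE big_ord0 mul0r.
Qed.


Unset Implicit Arguments.

Theorem mainTheorem14 (R : realType) (n : nat)
  (gamma0 gamma1 eta : R) (Sigma S : 'M[R]_n) :
  0 < gamma0 -> gamma0 <= gamma1 ->
  0 < eta -> eta <= 1 / gamma1 ->
  pdmx Sigma ->
  loewner_le (gamma0%:M) (invmx Sigma) -> loewner_le (invmx Sigma) (gamma1%:M) ->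
  symmx S ->
  loewner_le (gamma0%:M) S -> loewner_le S (gamma1%:M) ->
  let Sigma' := (1%:M - eta *: S) *m Sigma *m (1%:M - eta *: S) in
  let Sigma'' := 2^-1 *: (Sigma' + (2 * eta)%:M
                   + psd_sqrt (Sigma' *m (Sigma' + (4 * eta)%:M))) in
  loewner_le (gamma1^-1)%:M Sigma'' /\ loewner_le Sigma'' (gamma0^-1)%:M.
Proof.
case: n Sigma S => [|n] Sg S; first by move=> *; split; apply: psd0.
move=> g0 g01 e0 eg1 pdS lo0 hi1 sS loS hiS Sg' Sg''.
have g1 : 0 < gamma1 by apply: lt_le_trans g01.
have eg1' : eta * gamma1 <= 1 by rewrite -ler_pdivlMr // mul1r -[gamma1^-1]mul1r.
have eg0 : eta * gamma0 <= eta * gamma1 by rewrite ler_pM2l.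
have [sSg pdSg] := pdS.
have pSg v : 0 <= dot v (Sg *m v).
  have [->|v0] := eqVneq v 0; first by rewrite mulmx0 /dot mulmx0 mxE.
  by apply: ltW; have := pdSg v v0; rewrite -mulmxA.
have uSg : Sg \in unitmx.
  rewrite unitmxE unitfE; apply/negP => /det0P [v v0 vS].
  have := pdSg v^T; rewrite trmx_eq0 trmxK vS mul0mx mxE => /(_ v0).
  by rewrite ltxx.
have [_ lo0'] := proj1 (psdE _) lo0.
have [_ hi1'] := proj1 (psdE _) hi1.
have [_ loS'] := proj1 (psdE _) loS.
have [_ hiS'] := proj1 (psdE _) hiS.
move: lo0' hi1' loS' hiS'.
set Si := invmx Sg => lo0' hi1' loS' hiS'.
have sSi : Si^T = Si by rewrite /Si trmx_inv sSg.
have SiSg : Si *m Sg = 1%:M by rewrite mulVmx.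
have SgSi : Sg *m Si = 1%:M by rewrite mulmxV.
have loSi v : gamma0 * dot v v <= dot v (Si *m v).
  by have := lo0' v; rewrite mulmxBl dotBr dot_scalar subr_ge0.
have hiSi v : dot v (Si *m v) <= gamma1 * dot v v.
  by have := hi1' v; rewrite mulmxBl dotBr dot_scalar subr_ge0.
have loSS v : gamma0 * dot v v <= dot v (S *m v).
  by have := loS' v; rewrite mulmxBl dotBr dot_scalar subr_ge0.
have hiSS v : dot v (S *m v) <= gamma1 * dot v v.
  by have := hiS' v; rewrite mulmxBl dotBr dot_scalar subr_ge0.
have upSg v : gamma0 * dot v (Sg *m v) <= dot v v.
  pose u := Sg *m v.
  have h1 := loSi u.
  have e1 : dot u (Si *m u) = dot u v by rewrite /u mulmxA SiSg mul1mx.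
  have e2 : dot v (Sg *m v) = dot u v by rewrite dotC.
  have h2 := dot_ge0 (v - gamma0 *: u).
  rewrite !(dotBl, dotBr, dotZl, dotZr) (dotC v u) in h2.
  rewrite e1 in h1; rewrite e2.
  set a := dot u v in h1 h2 *; set b := dot u u in h1 h2 *.
  have h1' : 0 <= a - gamma0 * b by rewrite subr_ge0.
  have h3 := mulr_ge0 (ltW g0) h1'.
  nra.
have loSg v : dot v v <= gamma1 * dot v (Sg *m v).
  pose u := Si *m v.
  have h1 := hiSi v.
  have h2 := pSg (gamma1 *: v - u).
  have e1 : Sg *m u = v by rewrite /u mulmxA SgSi mul1mx.
  rewrite mulmxBr -scalemxAr e1 !(dotBl, dotBr, dotZl, dotZr) in h2.
  have e2 : dot u (Sg *m v) = dot v v by rewrite dotMr sSg e1.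
  have e3 : dot u v = dot v (Si *m v) by rewrite dotC.
  rewrite e2 e3 in h2.
  set a := dot v (Sg *m v) in h2 *; set b := dot v v in h1 h2 *.
  set q := dot v (Si *m v) in h1 h2 *.
  have := mulr_ge0 (ltW g1) (dot_ge0 v); rewrite -/b => h3.
  nra.
pose T := 1%:M - eta *: S.
have sT : T^T = T by rewrite /T linearB linearZ /= tr_scalar_mx sS.
pose p0 : {poly R} := 1 - eta *: 'X.
have hT : horner_mx S p0 = T by rewrite /p0 rmorphB /= rmorph1 linearZ /= horner_mx_X.
have hTT : horner_mx S (p0 * p0) = T *m T.
  by rewrite (rmorphM (horner_mx S)); congr (_ * _); exact: hT.
pose a0 := 1 - eta * gamma1; pose b0 := 1 - eta * gamma0.
have upT v : dot v (T *m T *m v) <= b0 ^+ 2 * dot v v.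
  have := poly_psd (p := (b0 ^+ 2)%:P - p0 * p0) sS loSS hiSS _ v.
  rewrite rmorphB /= horner_mx_C hTT mulmxBl dotBr dot_scalar subr_ge0.
  apply => x /andP [x0 x1]; rewrite /p0 !hornerE /b0.
  have : eta * x <= eta * gamma1 by rewrite ler_pM2l.
  have : eta * gamma0 <= eta * x by rewrite ler_pM2l.
  nra.
have loT v : a0 ^+ 2 * dot v v <= dot v (T *m T *m v).
  have := poly_psd (p := p0 * p0 - (a0 ^+ 2)%:P) sS loSS hiSS _ v.
  rewrite rmorphB /= horner_mx_C hTT mulmxBl dotBr dot_scalar subr_ge0.
  apply => x /andP [x0 x1]; rewrite /p0 !hornerE /a0.
  have : eta * x <= eta * gamma1 by rewrite ler_pM2l.
  have : eta * gamma0 <= eta * x by rewrite ler_pM2l.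
  nra.
have eA : Sg' = T *m Sg *m T by [].
have sA : Sg'^T = Sg' by rewrite eA !trmx_mul sT sSg mulmxA.
have eAv v : dot v (Sg' *m v) = dot (T *m v) (Sg *m (T *m v)).
  by rewrite eA -!mulmxA (dotMr v T) sT.
have eTT v : dot (T *m v) (T *m v) = dot v (T *m T *m v).
  by rewrite dotMr sT dotC mulmxA.
have upA v : gamma0 * dot v (Sg' *m v) <= b0 ^+ 2 * dot v v.
  by rewrite eAv (le_trans (upSg _)) // eTT.
have loA v : a0 ^+ 2 * dot v v <= gamma1 * dot v (Sg' *m v).
  by rewrite eAv (le_trans _ (loSg _)) // eTT.
have pA v : 0 <= dot v (Sg' *m v) by rewrite eAv.
have [pX eXX] : psdmx (psd_sqrt (Sg' *m (Sg' + (4 * eta)%:M))) /\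
    psd_sqrt (Sg' *m (Sg' + (4 * eta)%:M)) *m psd_sqrt (Sg' *m (Sg' + (4 * eta)%:M))
    = Sg' *m (Sg' + (4 * eta)%:M).
  have hm : forall x, 0 <= x -> 0 <= ('X * ('X + (4 * eta)%:P)).[x].
    by move=> x x0; rewrite !hornerE mulr_ge0 // addr_ge0 // mulr_ge0 // ltW.
  have [X [pX hX]] := sqrt_exists sA pA hm.
  have ex : exists X : 'M[R]_n.+1, psdmx X /\ X *m X = Sg' *m (Sg' + (4 * eta)%:M).
    exists X; split => //; rewrite hX (rmorphM (horner_mx Sg')) rmorphD /= horner_mx_X horner_mx_C.
    by [].
  exact: (epsilon_spec (inhabits 0) _ ex).
move: pX eXX; set X := psd_sqrt _ => pX eXX.
have sX : X^T = X by have [] := proj1 (psdE _) pX.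
have N0 v : 0 <= dot v v := dot_ge0 v.
split.
- pose k := 2 * gamma1^-1 - 2 * eta.
  have sZ : (k%:M - Sg')^T = k%:M - Sg' by rewrite linearB /= tr_scalar_mx sA.
  have hXZ : psdmx (X *m X - (k%:M - Sg') *m (k%:M - Sg')).
    rewrite eXX sq_aff'; apply: psd_aff2 => // v.
    have g1s : 0 < gamma1 ^+ 2 by rewrite exprn_gt0.
    rewrite -(ler_pM2l g1s).
    have -> : gamma1 ^+ 2 * (k ^+ 2 * dot v v) = 4 * (a0 ^+ 2 * dot v v).
      by rewrite /k /a0; field; rewrite gt_eqF.
    have -> : gamma1 ^+ 2 * ((2 * k + 4 * eta) * dot v (Sg' *m v))
       = 4 * (gamma1 * dot v (Sg' *m v)).
      by rewrite /k; field; rewrite gt_eqF.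
    by rewrite ler_pM2l // loA.
  have := mono pX sZ hXZ => h.
  rewrite /loewner_le.
  rewrite /Sg'' (@idL _ _ _ _ _ _ k) //; apply: psdZ h; by rewrite invr_ge0 ler0n.
- pose k := 2 * gamma0^-1 - 2 * eta.
  have hY : psdmx (k%:M - Sg').
    rewrite -[Sg' in _ - Sg']scale1r; apply: psd_aff1 => // v.
    rewrite -(ler_pM2l g0).
    have -> : gamma0 * (k * dot v v) = (2 - 2 * (eta * gamma0)) * dot v v.
      by rewrite /k; field; rewrite gt_eqF.
    rewrite mul1r (le_trans (upA v)) // ler_wpM2r ?dot_ge0 // /b0.
    have : 0 < eta * gamma0 by rewrite mulr_gt0.
    have : eta * gamma0 <= 1 by apply: le_trans eg1'.
    nra.
  have hYX : psdmx ((k%:M - Sg') *m (k%:M - Sg') - X *m X).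
    rewrite eXX sq_aff; apply: psd_aff1 => // v.
    have g0s : 0 < gamma0 ^+ 2 by rewrite exprn_gt0.
    rewrite -(ler_pM2l g0s).
    have -> : gamma0 ^+ 2 * (k ^+ 2 * dot v v) = 4 * (b0 ^+ 2 * dot v v).
      by rewrite /k /b0; field; rewrite gt_eqF.
    have -> : gamma0 ^+ 2 * ((2 * k + 4 * eta) * dot v (Sg' *m v))
       = 4 * (gamma0 * dot v (Sg' *m v)).
      by rewrite /k; field; rewrite gt_eqF.
    by rewrite ler_pM2l // upA.
  have := mono hY sX hYX => h.
  rewrite /loewner_le.
  rewrite /Sg'' (@idU _ _ _ _ _ _ k) //; apply: psdZ h; by rewrite invr_ge0 ler0n.
Qed.
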